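(* The universal abstract regular polytope $\mathcal{Q}=\{\{4,3\}_3,\{3,4\}_3\}$, with hemicubes as facets and hemi-octahedra as vertex figures, has no proper quotients: every polytope $\mathcal{R}$ admitting a covering $\mathcal{Q}\to\mathcal{R}$ is isomorphic to $\mathcal{Q}$.
   Context: The universal polytope $\{\mathcal{K},\mathcal{L}\}$ is the regular rank-4 abstract polytope with facets $\mathcal{K}$ and vertex figures $\mathcal{L}$ covering every regular polytope with these facets and vertex figures. $\{4,3\}_3=\{4,3\}/2$ is the hemicube and $\{3,4\}_3=\{3,4\}/2$ the hemi-octahedron (quotients of the cube and octahedron by their central inversion). A covering is a rank- and order-preserving surjection between polytopes mapping flags onto flags and preserving adjacency of flags; a quotient of $\mathcal{Q}$ is the image of such a covering, and a proper quotient is one not isomorphic to $\mathcal{Q}$. *)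

(* Defs.v *)
From Stdlib Require Import Arith Lia.

(* A poset-with-rank.  Ranks are shifted by +1: a face of (paper) rank j
   has [prk] equal to j+1, so the minimal face F_{-1} has prk 0 and the
   maximal face F_n of an n-polytope has prk (n+1). *)
Record Poset := { pt :> Type; ple : pt -> pt -> Prop; prk : pt -> nat }.

(* A flag of a rank-n polytope, listed by rank: f i is its face of prk i,
   for i = 0 .. n+1 (values beyond n+1 are irrelevant). *)
Definition is_flag (P : Poset) (n : nat) (f : nat -> P) : Prop :=
  (forall i, i <= S n -> prk P (f i) = i) /\
  (forall i j, i <= j -> j <= S n -> ple P (f i) (f j)).

Definition flag_eq (P : Poset) (n : nat) (f g : nat -> P) : Prop :=
  forall i, i <= S n -> f i = g i.

Definition adjacent (P : Poset) (n i : nat) (f g : nat -> P) : Prop :=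
  i <= S n /\ f i <> g i /\ (forall j, j <= S n -> j <> i -> f j = g j).

Definition strongly_flag_connected (P : Poset) (n : nat) : Prop :=
  forall f g, is_flag P n f -> is_flag P n g ->
  exists (k : nat) (h : nat -> nat -> P),
    flag_eq P n (h 0) f /\ flag_eq P n (h k) g /\
    (forall m, m <= k ->
       is_flag P n (h m) /\
       (forall j, j <= S n -> f j = g j -> h m j = f j)) /\
    (forall m, m < k -> exists i, adjacent P n i (h m) (h (S m))).

Definition is_polytope (n : nat) (P : Poset) : Prop :=
  (forall x, ple P x x) /\
  (forall x y, ple P x y -> ple P y x -> x = y) /\
  (forall x y z, ple P x y -> ple P y z -> ple P x z) /\
  (forall x, prk P x <= S n) /\
  (forall x y, ple P x y -> x <> y -> prk P x < prk P y) /\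
  (exists b, prk P b = 0 /\ forall x, ple P b x) /\
  (exists t, prk P t = S n /\ forall x, ple P x t) /\
  (* graded: every maximal chain meets every rank *)
  (forall x y i, ple P x y -> prk P x <= i -> i <= prk P y ->
     exists z, ple P x z /\ ple P z y /\ prk P z = i) /\
  (forall x y, ple P x y -> prk P y = prk P x + 2 ->
     exists z1 z2, z1 <> z2 /\
       ple P x z1 /\ ple P z1 y /\ z1 <> x /\ z1 <> y /\
       ple P x z2 /\ ple P z2 y /\ z2 <> x /\ z2 <> y /\
       (forall z, ple P x z -> ple P z y -> z <> x -> z <> y ->
                  z = z1 \/ z = z2)) /\
  strongly_flag_connected P n.

Definition order_iso (P Q : Poset) (f : P -> Q) : Prop :=
  (exists g : Q -> P, (forall x, g (f x) = x) /\ (forall y, f (g y) = y)) /\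
  (forall x y, ple P x y <-> ple Q (f x) (f y)).

Definition isomorphic (P Q : Poset) : Prop := exists f : P -> Q, order_iso P Q f.

Definition is_regular (n : nat) (P : Poset) : Prop :=
  is_polytope n P /\
  forall f g, is_flag P n f -> is_flag P n g ->
    exists s : P -> P, order_iso P P s /\ forall i, i <= S n -> s (f i) = g i.

Definition facet_section (P : Poset) (F : P) : Poset :=
  {| pt := { H : P | ple P H F };
     ple := fun a b => ple P (proj1_sig a) (proj1_sig b);
     prk := fun a => prk P (proj1_sig a) |}.

Definition vfig_section (P : Poset) (v : P) : Poset :=
  {| pt := { H : P | ple P v H };
     ple := fun a b => ple P (proj1_sig a) (proj1_sig b);
     prk := fun a => prk P (proj1_sig a) - 1 |}.

(* In a rank-n polytope the facets have paper rank n-1, i.e. prk n;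
   vertices have paper rank 0, i.e. prk 1. *)
Definition has_facets (n : nat) (P K : Poset) : Prop :=
  forall F : P, prk P F = n -> isomorphic (facet_section P F) K.

Definition has_vertex_figures (P L : Poset) : Prop :=
  forall v : P, prk P v = 1 -> isomorphic (vfig_section P v) L.

Definition covering (n : nat) (P R : Poset) (f : P -> R) : Prop :=
  (forall x, prk R (f x) = prk P x) /\
  (forall x y, ple P x y -> ple R (f x) (f y)) /\
  (forall y, exists x, f x = y) /\
  (forall phi, is_flag R n phi ->
     exists psi, is_flag P n psi /\ forall i, i <= S n -> f (psi i) = phi i) /\
  (forall i phi psi, is_flag P n phi -> is_flag P n psi -> adjacent P n i phi psi ->
     adjacent R n i (fun j => f (phi j)) (fun j => f (psi j))).

Definition is_universal4 (K L Q : Poset) : Prop :=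
  is_regular 4 Q /\ has_facets 4 Q K /\ has_vertex_figures Q L /\
  forall P : Poset, is_regular 4 P -> has_facets 4 P K -> has_vertex_figures P L ->
    exists f : Q -> P, covering 4 Q P f.

(* Nonempty faces of the cube [-1,1]^3 are sign vectors v in {0,+,-}^3:
   the face {x | x_i = v_i whenever v_i <> 0}; (0,0,0) is the whole cube.
   The hemicube identifies v with -v; we use canonical representatives
   (first nonzero coordinate +), and None for the empty face. *)
Inductive sgn := Zr | Pl | Mi.

Definition sneg (s : sgn) : sgn :=
  match s with Zr => Zr | Pl => Mi | Mi => Pl end.

Definition cvec := (sgn * sgn * sgn)%type.

Definition vneg (v : cvec) : cvec :=
  let '(a, b, c) := v in (sneg a, sneg b, sneg c).

Definition canonb (v : cvec) : bool :=
  match v with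
  | (Zr, Zr, Zr) => true
  | (Zr, Zr, Pl) => true
  | (Zr, Zr, Mi) => false
  | (Zr, Pl, _) => true
  | (Zr, Mi, _) => false
  | (Pl, _, _) => true
  | (Mi, _, _) => false
  end.

(* face v is contained in face w *)
Definition refines (v w : cvec) : Prop :=
  let '(a1, a2, a3) := v in
  let '(b1, b2, b3) := w in
  (b1 <> Zr -> a1 = b1) /\ (b2 <> Zr -> a2 = b2) /\ (b3 <> Zr -> a3 = b3).

Definition zr_count (s : sgn) : nat := match s with Zr => 1 | _ => 0 end.

Definition hc_face := option { v : cvec | canonb v = true }.

Definition hc_le (x y : hc_face) : Prop :=
  match x, y with
  | None, _ => True
  | Some _, None => False
  | Some a, Some b =>
      refines (proj1_sig a) (proj1_sig b) \/
      refines (proj1_sig a) (vneg (proj1_sig b))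
  end.

Definition hc_rk (x : hc_face) : nat :=
  match x with
  | None => 0
  | Some a => let '(p, q, r) := proj1_sig a in
              1 + zr_count p + zr_count q + zr_count r
  end.

Definition hemicube : Poset := {| pt := hc_face; ple := hc_le; prk := hc_rk |}.

Definition hemioctahedron : Poset :=
  {| pt := hc_face; ple := fun x y => hc_le y x; prk := fun x => 4 - hc_rk x |}.

(* Main.v *)
Require Import Defs.
From Stdlib Require Import Arith Lia List Bool Classical IndefiniteDescription Eqdep_dec ProofIrrelevance.
Import ListNotations.

Definition sgn_eqb (a b : sgn) : bool :=
  match a, b with Zr, Zr | Pl, Pl | Mi, Mi => true | _, _ => false end.
Lemma sgn_eqb_ok a b : sgn_eqb a b = true <-> a = b.
Proof. destruct a, b; simpl; split; congruence. Qed.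

Definition c1b (a b : sgn) : bool := implb (negb (sgn_eqb b Zr)) (sgn_eqb a b).
Lemma c1b_ok a b : (b <> Zr -> a = b) <-> c1b a b = true.
Proof.
  destruct a, b; cbn; split; intros H; try reflexivity; try (intros; congruence);
  try discriminate; exfalso; assert (E := H ltac:(discriminate)); discriminate.
Qed.

Definition refb (v w : cvec) : bool :=
  let '(a1, a2, a3) := v in let '(b1, b2, b3) := w in
  c1b a1 b1 && c1b a2 b2 && c1b a3 b3.
Lemma refb_ok v w : refines v w <-> refb v w = true.
Proof.
  destruct v as [[a1 a2] a3], w as [[b1 b2] b3]; simpl.
  rewrite !andb_true_iff, <- !c1b_ok; tauto.
Qed.

Definition hc_leb (x y : hc_face) : bool :=
  match x, y with
  | None, _ => true
  | Some _, None => false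
  | Some a, Some b => refb (proj1_sig a) (proj1_sig b) || refb (proj1_sig a) (vneg (proj1_sig b))
  end.
Lemma hc_le_ok x y : hc_le x y <-> hc_leb x y = true.
Proof.
  destruct x as [a|], y as [b|]; simpl; try tauto.
  - rewrite orb_true_iff, <- !refb_ok; tauto.
  - split; [intros []|discriminate].
Qed.

Definition cvec_eqb (v w : cvec) : bool :=
  let '(a1, a2, a3) := v in let '(b1, b2, b3) := w in
  sgn_eqb a1 b1 && sgn_eqb a2 b2 && sgn_eqb a3 b3.
Lemma cvec_eqb_ok v w : cvec_eqb v w = true <-> v = w.
Proof.
  destruct v as [[a1 a2] a3], w as [[b1 b2] b3]; unfold cvec_eqb.
  rewrite !andb_true_iff, !sgn_eqb_ok; split.
  - intros [[-> ->] ->]; reflexivity.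
  - intros H; inversion H; auto.
Qed.

Lemma canon_irr v (H1 H2 : canonb v = true) : H1 = H2.
Proof. apply UIP_dec, bool_dec. Qed.

Definition hc_eqb (x y : hc_face) : bool :=
  match x, y with
  | None, None => true
  | Some a, Some b => cvec_eqb (proj1_sig a) (proj1_sig b)
  | _, _ => false
  end.
Lemma hc_eqb_ok x y : hc_eqb x y = true <-> x = y.
Proof.
  destruct x as [[v Hv]|], y as [[w Hw]|]; simpl; try (split; congruence).
  rewrite cvec_eqb_ok; split.
  - intros E; subst w. rewrite (canon_irr v Hv Hw). reflexivity.
  - intros E; inversion E; auto.
Qed.

Definition mk (v : cvec) (H : canonb v = true) : hc_face := Some (exist _ v H).

Definition all_hc : list hc_face :=
  [None; mk (Zr,Zr,Zr) eq_refl; mk (Zr,Zr,Pl) eq_refl; mk (Zr,Pl,Zr) eq_refl;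
   mk (Zr,Pl,Pl) eq_refl; mk (Zr,Pl,Mi) eq_refl; mk (Pl,Zr,Zr) eq_refl;
   mk (Pl,Zr,Pl) eq_refl; mk (Pl,Zr,Mi) eq_refl; mk (Pl,Pl,Zr) eq_refl;
   mk (Pl,Mi,Zr) eq_refl; mk (Pl,Pl,Pl) eq_refl; mk (Pl,Pl,Mi) eq_refl;
   mk (Pl,Mi,Pl) eq_refl; mk (Pl,Mi,Mi) eq_refl].

Lemma all_hc_complete x : In x all_hc.
Proof.
  assert (existsb (hc_eqb x) all_hc = true) as E.
  { destruct x as [[[[a b] c] H]|]; [destruct a, b, c; (simpl in H; discriminate H) || reflexivity | reflexivity]. }
  apply existsb_exists in E. destruct E as [y [Hy E]]. apply hc_eqb_ok in E. subst; auto.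
Qed.

Lemma hc_forall (p : hc_face -> bool) : forallb p all_hc = true -> forall x, p x = true.
Proof. intros H x. rewrite forallb_forall in H. apply H, all_hc_complete. Qed.
Lemma hc_exists (p : hc_face -> bool) : existsb p all_hc = true -> exists x, p x = true.
Proof. intros H. apply existsb_exists in H. destruct H as [x [_ H]]; eauto. Qed.

Lemma hc_neq x y : x <> y -> hc_eqb x y = false.
Proof. intros H. destruct (hc_eqb x y) eqn:E; auto. apply hc_eqb_ok in E. contradiction. Qed.

Lemma impl_true b : implb true b = true -> b = true.
Proof. destruct b; auto. Qed.

Lemma hc_bound x : hc_rk x <= 4.
Proof.
  apply Nat.leb_le. revert x. apply hc_forall with (p := fun x => hc_rk x <=? 4). reflexivity.
Qed.

Lemma hc_mono x y : hc_le x y -> x <> y -> hc_rk x < hc_rk y.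
Proof.
  intros H1 H2. apply hc_le_ok in H1. apply hc_neq in H2.
  assert (K := hc_forall _ (eq_refl : forallb (fun x => forallb (fun y =>
     implb (hc_leb x y && negb (hc_eqb x y)) (hc_rk x <? hc_rk y)) all_hc) all_hc = true) x).
  cbv beta in K. assert (K2 := hc_forall _ K y). cbv beta in K2.
  rewrite H1, H2 in K2. apply impl_true in K2. apply Nat.ltb_lt; auto.
Qed.

Lemma hc_pred x : 0 < hc_rk x -> exists y, hc_le y x /\ hc_rk y = hc_rk x - 1.
Proof.
  intros H.
  assert (K := hc_forall _ (eq_refl : forallb (fun x =>
     implb (0 <? hc_rk x) (existsb (fun y => hc_leb y x && (hc_rk y =? hc_rk x - 1)) all_hc)) all_hc = true) x).
  cbv beta in K. apply Nat.ltb_lt in H. rewrite H in K. apply impl_true in K.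
  apply hc_exists in K. destruct K as [y K]. apply andb_true_iff in K. destruct K as [K1 K2].
  exists y. split; [apply hc_le_ok; auto | apply Nat.eqb_eq; auto].
Qed.

Lemma hc_succ x : hc_rk x < 4 -> exists y, hc_le x y /\ hc_rk y = S (hc_rk x).
Proof.
  intros H.
  assert (K := hc_forall _ (eq_refl : forallb (fun x =>
     implb (hc_rk x <? 4) (existsb (fun y => hc_leb x y && (hc_rk y =? S (hc_rk x))) all_hc)) all_hc = true) x).
  cbv beta in K. apply Nat.ltb_lt in H. rewrite H in K. apply impl_true in K.
  apply hc_exists in K. destruct K as [y K]. apply andb_true_iff in K. destruct K as [K1 K2].
  exists y. split; [apply hc_le_ok; auto | apply Nat.eqb_eq; auto].
Qed.

Lemma hc_min x : (forall y, hc_le x y) -> hc_rk x = 0.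
Proof. intros H. specialize (H None). destruct x; simpl in *; [contradiction | reflexivity]. Qed.

Lemma hc_max x : (forall y, hc_le y x) -> hc_rk x = 4.
Proof.
  intros H.
  assert (K := hc_forall _ (eq_refl : forallb (fun x =>
     implb (forallb (fun y => hc_leb y x) all_hc) (hc_rk x =? 4)) all_hc = true) x).
  cbv beta in K.
  assert (E : forallb (fun y => hc_leb y x) all_hc = true).
  { apply forallb_forall. intros y _. apply hc_le_ok, H. }
  rewrite E in K. apply impl_true in K. apply Nat.eqb_eq; auto.
Qed.

Lemma hcH1 a b : hc_rk a = 1 -> hc_rk b = 1 -> a <> b ->
  exists c, hc_rk c = 2 /\ hc_le a c /\ hc_le b c.
Proof.
  intros Ha Hb Hab. apply hc_neq in Hab.
  assert (K := hc_forall _ (eq_refl : forallb (fun a => forallb (fun b =>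
     implb ((hc_rk a =? 1) && (hc_rk b =? 1) && negb (hc_eqb a b))
       (existsb (fun c => (hc_rk c =? 2) && hc_leb a c && hc_leb b c) all_hc)) all_hc) all_hc = true) a).
  cbv beta in K. assert (K2 := hc_forall _ K b). cbv beta in K2.
  rewrite Ha, Hb, Hab in K2. apply impl_true in K2.
  clear K. apply hc_exists in K2. destruct K2 as [c K]. rewrite !andb_true_iff in K.
  destruct K as [[K1 K2] K3]. exists c.
  split; [apply Nat.eqb_eq; auto|split; apply hc_le_ok; auto].
Qed.

Lemma hcH2 a b c d : hc_rk a = 1 -> hc_rk b = 1 -> a <> b -> hc_rk c = 2 -> hc_rk d = 2 ->
  hc_le a c -> hc_le b c -> hc_le a d -> hc_le b d -> c = d.
Proof.
  intros Ha Hb Hab Hc Hd H1 H2 H3 H4. apply hc_neq in Hab.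
  apply hc_le_ok in H1, H2, H3, H4.
  assert (K := hc_forall _ (eq_refl : forallb (fun a => forallb (fun b => forallb (fun c => forallb (fun d =>
     implb ((hc_rk a =? 1) && (hc_rk b =? 1) && negb (hc_eqb a b) && (hc_rk c =? 2) && (hc_rk d =? 2)
            && hc_leb a c && hc_leb b c && hc_leb a d && hc_leb b d) (hc_eqb c d))
     all_hc) all_hc) all_hc) all_hc = true) a).
  cbv beta in K. assert (K2 := hc_forall _ K b). cbv beta in K2.
  assert (K3 := hc_forall _ K2 c). cbv beta in K3.
  assert (K4 := hc_forall _ K3 d). cbv beta in K4.
  rewrite Ha, Hb, Hab, Hc, Hd, H1, H2, H3, H4 in K4. apply impl_true in K4.
  apply hc_eqb_ok; auto.
Qed.

Lemma hcH3 a s : hc_rk a = 1 -> hc_rk s = 3 -> hc_le a s.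
Proof.
  intros Ha Hs.
  assert (K := hc_forall _ (eq_refl : forallb (fun a => forallb (fun s =>
     implb ((hc_rk a =? 1) && (hc_rk s =? 3)) (hc_leb a s)) all_hc) all_hc = true) a).
  cbv beta in K. assert (K2 := hc_forall _ K s). cbv beta in K2.
  rewrite Ha, Hs in K2. apply impl_true in K2. apply hc_le_ok; auto.
Qed.

Section Poly.
Variable P : Poset.
Variable n : nat.
Hypothesis HP : is_polytope n P.

Lemma P_refl x : ple P x x.
Proof. destruct HP as (h1&_); auto. Qed.
Lemma P_anti x y : ple P x y -> ple P y x -> x = y.
Proof. destruct HP as (_&h2&_); auto. Qed.
Lemma P_trans x y z : ple P x y -> ple P y z -> ple P x z.
Proof. destruct HP as (_&_&h3&_); eauto. Qed.
Lemma P_bound x : prk P x <= S n.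
Proof. destruct HP as (_&_&_&h4&_); auto. Qed.
Lemma P_strict x y : ple P x y -> x <> y -> prk P x < prk P y.
Proof. destruct HP as (_&_&_&_&h5&_); auto. Qed.
Lemma P_bot : exists b, prk P b = 0 /\ forall x, ple P b x.
Proof. destruct HP as (_&_&_&_&_&h6&_); auto. Qed.
Lemma P_top : exists t, prk P t = S n /\ forall x, ple P x t.
Proof. destruct HP as (_&_&_&_&_&_&h7&_); auto. Qed.
Lemma P_graded x y i : ple P x y -> prk P x <= i -> i <= prk P y ->
     exists z, ple P x z /\ ple P z y /\ prk P z = i.
Proof. destruct HP as (_&_&_&_&_&_&_&h8&_); auto. Qed.
Lemma P_diamond x y : ple P x y -> prk P y = prk P x + 2 ->
     exists z1 z2, z1 <> z2 /\
       ple P x z1 /\ ple P z1 y /\ z1 <> x /\ z1 <> y /\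
       ple P x z2 /\ ple P z2 y /\ z2 <> x /\ z2 <> y /\
       (forall z, ple P x z -> ple P z y -> z <> x -> z <> y ->
                  z = z1 \/ z = z2).
Proof. destruct HP as (_&_&_&_&_&_&_&_&h9&_); auto. Qed.
Lemma P_sfc : strongly_flag_connected P n.
Proof. destruct HP as (_&_&_&_&_&_&_&_&_&h10); auto. Qed.

Lemma P_rk_le x y : ple P x y -> prk P x <= prk P y.
Proof.
  intros H. destruct (classic (x = y)) as [->|Hn]; [lia|].
  apply Nat.lt_le_incl, P_strict; auto.
Qed.

Lemma P_eq_rank x y : ple P x y -> prk P x = prk P y -> x = y.
Proof.
  intros H E. destruct (classic (x = y)) as [|Hn]; auto.
  pose proof (P_strict x y H Hn); lia.
Qed.

Lemma P_rank0 x : prk P x = 0 -> forall y, ple P x y.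
Proof.
  intros Hx y. destruct P_bot as [b [Hb Hb2]].
  assert (b = x) by (apply P_eq_rank; auto; lia). subst; auto.
Qed.

Lemma P_rankT x : prk P x = S n -> forall y, ple P y x.
Proof.
  intros Hx y. destruct P_top as [t [Ht Ht2]].
  assert (x = t) by (apply P_eq_rank; auto; lia). subst; auto.
Qed.

Lemma P_three x y p q r : ple P x y -> prk P y = prk P x + 2 ->
  ple P x p -> ple P p y -> prk P p = prk P x + 1 ->
  ple P x q -> ple P q y -> prk P q = prk P x + 1 ->
  ple P x r -> ple P r y -> prk P r = prk P x + 1 ->
  p = q \/ p = r \/ q = r.
Proof.
  intros Hxy Hr Hp1 Hp2 Hp3 Hq1 Hq2 Hq3 Hr1 Hr2 Hr3.
  destruct (P_diamond x y Hxy Hr) as (z1&z2&_&_&_&_&_&_&_&_&_&Hz).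
  assert (Hne : forall w, prk P w = prk P x + 1 -> w <> x /\ w <> y).
  { intros w Hw; split; intro E; subst; lia. }
  destruct (Hne p Hp3), (Hne q Hq3), (Hne r Hr3).
  destruct (Hz p) as [->| ->]; auto; destruct (Hz q) as [->| ->]; auto;
  destruct (Hz r) as [->| ->]; auto.
Qed.

Definition chainP (h : nat -> P) (p q : nat) : Prop :=
  (forall i, p <= i -> i <= q -> prk P (h i) = i) /\
  (forall i j, p <= i -> i <= j -> j <= q -> ple P (h i) (h j)).

Lemma segment d : forall a b, ple P a b -> prk P b = prk P a + d ->
  exists h, chainP h (prk P a) (prk P b) /\ h (prk P a) = a /\ h (prk P b) = b.
Proof.
  induction d as [|d IH]; intros a b Hab Hr.
  - assert (a = b) by (apply P_eq_rank; auto; lia). subst b.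
    exists (fun _ => a). split; [split|split; reflexivity].
    + intros; lia.
    + intros; apply P_refl.
  - destruct (P_graded a b (prk P a + d) Hab) as [z [Haz [Hzb Hz]]]; try lia.
    destruct (IH a z Haz) as [h [[Hh1 Hh2] [Ha Hz']]]; try lia.
    exists (fun i => if Nat.eqb i (prk P b) then b else h i).
    split; [split|split].
    + intros i H1 H2. destruct (Nat.eqb_spec i (prk P b)); auto. apply Hh1; lia.
    + intros i j H1 H2 H3.
      destruct (Nat.eqb_spec i (prk P b)), (Nat.eqb_spec j (prk P b)); try lia.
      * apply P_refl.
      * apply P_trans with z; auto. rewrite <- Hz'. apply Hh2; lia.
      * apply Hh2; lia.
    + destruct (Nat.eqb_spec (prk P a) (prk P b)); [lia|auto].
    + rewrite Nat.eqb_refl; auto.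
Qed.

Lemma glue h1 h2 p q r : chainP h1 p q -> chainP h2 q r -> h1 q = h2 q -> p <= q -> q <= r ->
  chainP (fun i => if Nat.leb i q then h1 i else h2 i) p r.
Proof.
  intros [A1 A2] [B1 B2] E Hpq Hqr. split.
  - intros i H1 H2. destruct (Nat.leb_spec i q); [apply A1|apply B1]; lia.
  - intros i j H1 H2 H3. destruct (Nat.leb_spec i q), (Nat.leb_spec j q).
    + apply A2; lia.
    + apply P_trans with (h1 q); [apply A2; lia|]. rewrite E. apply B2; lia.
    + lia.
    + apply B2; lia.
Qed.

Lemma flag_through x y : ple P x y ->
  exists phi, is_flag P n phi /\ phi (prk P x) = x /\ phi (prk P y) = y.
Proof.
  intros Hxy. destruct P_bot as [b [Hb Hb2]]. destruct P_top as [t [Ht Ht2]].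
  assert (Hl := P_rk_le x y Hxy).
  destruct (segment (prk P x) b x (Hb2 x)) as [h1 [C1 [E1 F1]]]; [lia|].
  destruct (segment (prk P y - prk P x) x y Hxy) as [h2 [C2 [E2 F2]]]; [lia|].
  destruct (segment (S n - prk P y) y t (Ht2 y)) as [h3 [C3 [E3 F3]]]; [pose proof (P_bound y); lia|].
  rewrite Hb in C1, E1. rewrite Ht in C3, F3.
  assert (G1 := glue h1 h2 0 (prk P x) (prk P y) C1 C2 ltac:(congruence) ltac:(lia) Hl).
  assert (G2 := glue _ h3 0 (prk P y) (S n) G1 C3).
  assert (Ey : (if Nat.leb (prk P y) (prk P x) then h1 (prk P y) else h2 (prk P y)) = y).
  { destruct (Nat.leb_spec (prk P y) (prk P x)); auto.
    assert (prk P x = prk P y) by lia. rewrite <- H0, F1. apply P_eq_rank; auto. }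
  specialize (G2 ltac:(cbv beta; rewrite Ey; congruence) ltac:(lia) ltac:(apply P_bound)).
  exists (fun i => if Nat.leb i (prk P y) then (if Nat.leb i (prk P x) then h1 i else h2 i) else h3 i).
  split; [|split].
  - destruct G2 as [G2a G2b]. split.
    + intros i Hi. apply G2a; lia.
    + intros i j Hij Hj. apply G2b; lia.
  - cbv beta. rewrite (proj2 (Nat.leb_le _ _) Hl). rewrite Nat.leb_refl. auto.
  - cbv beta. rewrite Nat.leb_refl. auto.
Qed.

Lemma flag_rank phi i : is_flag P n phi -> i <= S n -> prk P (phi i) = i.
Proof. intros [H _]; auto. Qed.
Lemma flag_le phi i j : is_flag P n phi -> i <= j -> j <= S n -> ple P (phi i) (phi j).
Proof. intros [_ H]; auto. Qed.

Lemma flag_replace phi i z : is_flag P n phi -> 1 <= i -> i <= n ->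
  prk P z = i -> ple P (phi (i-1)) z -> ple P z (phi (S i)) ->
  is_flag P n (fun j => if Nat.eqb j i then z else phi j).
Proof.
  intros Hf H1 H2 Hz Hlo Hhi. split.
  - intros j Hj. destruct (Nat.eqb_spec j i); subst; auto. apply flag_rank; auto.
  - intros j k Hjk Hk. destruct (Nat.eqb_spec j i), (Nat.eqb_spec k i).
    + apply P_refl.
    + apply P_trans with (phi (S i)); auto. apply flag_le; auto; lia.
    + apply P_trans with (phi (i-1)); auto. apply flag_le; auto; lia.
    + apply flag_le; auto.
Qed.

Lemma flag_replace_adj phi i z : i <= S n -> phi i <> z ->
  adjacent P n i phi (fun j => if Nat.eqb j i then z else phi j).
Proof.
  intros H1 H2. split; auto. split.
  - rewrite Nat.eqb_refl; auto.
  - intros j _ Hj. destruct (Nat.eqb_spec j i); [contradiction|auto].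
Qed.

End Poly.

Lemma iso_rank (A B : Type) (leA : A -> A -> Prop) (rA : A -> nat) (leB : B -> B -> Prop) (rB : B -> nat)
  (phi : A -> B) (psi : B -> A)
  (H1 : forall a, psi (phi a) = a) (H2 : forall b, phi (psi b) = b)
  (Hle : forall x y, leA x y <-> leB (phi x) (phi y))
  (monoA : forall x y, leA x y -> x <> y -> rA x < rA y)
  (monoB : forall x y, leB x y -> x <> y -> rB x < rB y)
  (predA : forall x, 0 < rA x -> exists y, leA y x /\ rA y = rA x - 1)
  (predB : forall x, 0 < rB x -> exists y, leB y x /\ rB y = rB x - 1)
  (minA : forall x, rA x = 0 -> forall y, leA x y)
  (minB : forall x, (forall y, leB x y) -> rB x = 0) :
  forall x, rB (phi x) = rA x.
Proof.
  intros x. remember (rA x) as k eqn:Hk. revert x Hk.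
  induction k as [k IH] using lt_wf_ind. intros x Hk.
  destruct k as [|k].
  - apply minB. intros y. rewrite <- (H2 y). apply Hle. apply minA. auto.
  - destruct (predA x) as [y [Hyx Hry]]; [lia|].
    assert (IHy : rB (phi y) = k) by (apply (IH k); lia).
    assert (Hne : phi y <> phi x).
    { intro E. apply (f_equal psi) in E. rewrite !H1 in E. subst y. lia. }
    pose proof (monoB _ _ (proj1 (Hle _ _) Hyx) Hne) as Hlt.
    destruct (predB (phi x)) as [w [Hwx Hrw]]; [lia|].
    assert (Hpw : leA (psi w) x) by (apply Hle; rewrite H2; auto).
    assert (Hne2 : psi w <> x).
    { intro E. assert (w = phi x) by (rewrite <- E, H2; auto). subst w. lia. }
    pose proof (monoA _ _ Hpw Hne2) as Hlt2.
    assert (IHw : rB (phi (psi w)) = rA (psi w)) by (apply (IH (rA (psi w))); lia).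
    rewrite H2 in IHw. lia.
Qed.

Section QFacts.
Variable Q : Poset.
Hypothesis HP : is_polytope 4 Q.
Hypothesis HFac : has_facets 4 Q hemicube.
Hypothesis HV : has_vertex_figures Q hemioctahedron.

Lemma facet_rank F (phi : facet_section Q F -> hc_face) (g : hc_face -> facet_section Q F)
  (Hg1 : forall x, g (phi x) = x) (Hg2 : forall y, phi (g y) = y)
  (Hle : forall x y, ple Q (proj1_sig x) (proj1_sig y) <-> hc_le (phi x) (phi y)) :
  forall x, hc_rk (phi x) = prk Q (proj1_sig x).
Proof.
  apply (iso_rank (facet_section Q F) hc_face (fun x y => ple Q (proj1_sig x) (proj1_sig y))
          (fun x => prk Q (proj1_sig x)) hc_le hc_rk phi g Hg1 Hg2 Hle).
  - intros [x Hx] [y Hy] H Hn. simpl in *. apply (P_strict Q 4 HP); auto.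
    intro E; subst; apply Hn; apply subset_eq_compat; auto.
  - apply hc_mono.
  - intros [x Hx] H. simpl in *. destruct (P_bot Q 4 HP) as [b [Hb Hb2]].
    destruct (P_graded Q 4 HP b x (prk Q x - 1) (Hb2 x)) as [z [H1 [H2 H3]]]; try lia.
    exists (exist _ z (P_trans Q 4 HP _ _ _ H2 Hx)). simpl. auto.
  - apply hc_pred.
  - intros [x Hx] H [y Hy]. simpl in *. apply (P_rank0 Q 4 HP); auto.
  - apply hc_min.
Qed.

Lemma vfig_rank v (Hv : prk Q v = 1) (phi : vfig_section Q v -> hc_face) (g : hc_face -> vfig_section Q v)
  (Hg1 : forall x, g (phi x) = x) (Hg2 : forall y, phi (g y) = y)
  (Hle : forall x y, ple Q (proj1_sig x) (proj1_sig y) <-> hc_le (phi y) (phi x)) :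
  forall x, hc_rk (phi x) = 5 - prk Q (proj1_sig x).
Proof.
  assert (Hge : forall x : vfig_section Q v, 1 <= prk Q (proj1_sig x)).
  { intros [x Hx]; simpl. rewrite <- Hv. apply (P_rk_le Q 4 HP); auto. }
  assert (K : forall x, 4 - hc_rk (phi x) = prk Q (proj1_sig x) - 1).
  { apply (iso_rank (vfig_section Q v) hc_face (fun x y => ple Q (proj1_sig x) (proj1_sig y))
          (fun x => prk Q (proj1_sig x) - 1) (fun a b => hc_le b a) (fun a => 4 - hc_rk a) phi g Hg1 Hg2 Hle).
    - intros x y H Hn. pose proof (Hge x). pose proof (Hge y). destruct x as [x Hx], y as [y Hy].
      simpl in *. assert (prk Q x < prk Q y); [|lia]. apply (P_strict Q 4 HP); auto.
      intro E; subst; apply Hn; apply subset_eq_compat; auto.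
    - intros x y H Hn. pose proof (hc_mono y x H (fun E => Hn (eq_sym E))). pose proof (hc_bound x). cbv beta. lia.
    - intros [x Hx] H. simpl in *.
      destruct (P_graded Q 4 HP v x (prk Q x - 1) Hx) as [z [H1 [H2 H3]]]; try lia.
      exists (exist _ z H1). simpl. split; auto; lia.
    - intros x H. destruct (hc_succ x) as [y [H1 H2]]; [lia|]. exists y; split; auto. lia.
    - intros [x Hx] H [y Hy]. simpl in *.
      assert (v = x). { apply (P_eq_rank Q 4 HP); auto. pose proof (P_rk_le Q 4 HP _ _ Hx). lia. }
      subst; auto.
    - intros x H. rewrite (hc_max x H). auto. }
  intros x. specialize (K x). pose proof (hc_bound (phi x)). pose proof (Hge x).
  pose proof (P_bound Q 4 HP (proj1_sig x)). lia.
Qed.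

Ltac get_facet F HF :=
  let phi := fresh "phi" in let g := fresh "g" in let Hg1 := fresh "Hg1" in
  let Hg2 := fresh "Hg2" in let Hle := fresh "Hle" in let Hr := fresh "Hr" in
  destruct (HFac F HF) as [phi [[g [Hg1 Hg2]] Hle]];
  assert (Hr := facet_rank F phi g Hg1 Hg2 Hle).

Lemma FQ1 F a b : prk Q F = 4 -> prk Q a = 1 -> prk Q b = 1 -> a <> b -> ple Q a F -> ple Q b F ->
  exists e, prk Q e = 2 /\ ple Q a e /\ ple Q b e.
Proof.
  intros HF Ha Hb Hab HaF HbF. get_facet F HF.
  set (xa := exist (fun H => ple Q H F) a HaF). set (xb := exist (fun H => ple Q H F) b HbF).
  assert (Hne : phi xa <> phi xb).
  { intro E. apply (f_equal g) in E. rewrite !Hg1 in E. apply Hab. apply (f_equal (@proj1_sig _ _) E). }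
  destruct (hcH1 (phi xa) (phi xb)) as [c [Hc [H1 H2]]]; [rewrite Hr; auto|rewrite Hr; auto|auto|].
  exists (proj1_sig (g c)). split; [|split].
  - rewrite <- (Hr (g c)), Hg2; auto.
  - apply (proj2 (Hle xa (g c))). rewrite Hg2; auto.
  - apply (proj2 (Hle xb (g c))). rewrite Hg2; auto.
Qed.

Lemma FQ2 F a b e e' : prk Q F = 4 -> prk Q a = 1 -> prk Q b = 1 -> a <> b ->
  prk Q e = 2 -> prk Q e' = 2 -> ple Q e F -> ple Q e' F ->
  ple Q a e -> ple Q b e -> ple Q a e' -> ple Q b e' -> e = e'.
Proof.
  intros HF Ha Hb Hab He He' HeF He'F H1 H2 H3 H4. get_facet F HF.
  set (xa := exist (fun H => ple Q H F) a (P_trans Q 4 HP _ _ _ H1 HeF)).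
  set (xb := exist (fun H => ple Q H F) b (P_trans Q 4 HP _ _ _ H2 HeF)).
  set (xe := exist (fun H => ple Q H F) e HeF).
  set (xe' := exist (fun H => ple Q H F) e' He'F).
  assert (Hne : phi xa <> phi xb).
  { intro E. apply (f_equal g) in E. rewrite !Hg1 in E. apply Hab. apply (f_equal (@proj1_sig _ _) E). }
  assert (E : phi xe = phi xe').
  { apply (hcH2 (phi xa) (phi xb)); auto; try (rewrite Hr; auto); apply Hle; auto. }
  apply (f_equal g) in E. rewrite !Hg1 in E. apply (f_equal (@proj1_sig _ _) E).
Qed.

Lemma FQ3 F a s : prk Q F = 4 -> prk Q a = 1 -> prk Q s = 3 -> ple Q a F -> ple Q s F -> ple Q a s.
Proof.
  intros HF Ha Hs HaF HsF. get_facet F HF.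
  set (xa := exist (fun H => ple Q H F) a HaF). set (xs := exist (fun H => ple Q H F) s HsF).
  apply (proj2 (Hle xa xs)). apply hcH3; rewrite Hr; auto.
Qed.

Ltac get_vfig v Hv :=
  let phi := fresh "phi" in let g := fresh "g" in let Hg1 := fresh "Hg1" in
  let Hg2 := fresh "Hg2" in let Hle := fresh "Hle" in let Hr := fresh "Hr" in
  destruct (HV v Hv) as [phi [[g [Hg1 Hg2]] Hle]];
  assert (Hr := vfig_rank v Hv phi g Hg1 Hg2 Hle).

Lemma VQ1 v e G : prk Q v = 1 -> prk Q e = 2 -> prk Q G = 4 -> ple Q v e -> ple Q v G -> ple Q e G.
Proof.
  intros Hv He HG H1 H2. get_vfig v Hv.
  set (xe := exist (fun H => ple Q v H) e H1). set (xG := exist (fun H => ple Q v H) G H2).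
  apply (proj2 (Hle xe xG)). apply hcH3; rewrite Hr; simpl; [rewrite HG|rewrite He]; auto.
Qed.

Lemma VQ2 v G H : prk Q v = 1 -> prk Q G = 4 -> prk Q H = 4 -> G <> H -> ple Q v G -> ple Q v H ->
  exists s, prk Q s = 3 /\ ple Q s G /\ ple Q s H.
Proof.
  intros Hv HG HH Hne H1 H2. get_vfig v Hv.
  set (xG := exist (fun H => ple Q v H) G H1). set (xH := exist (fun H0 => ple Q v H0) H H2).
  assert (Hne' : phi xG <> phi xH).
  { intro E. apply (f_equal g) in E. rewrite !Hg1 in E. apply Hne. apply (f_equal (@proj1_sig _ _) E). }
  destruct (hcH1 (phi xG) (phi xH)) as [c [Hc [K1 K2]]];
    [rewrite Hr; simpl; rewrite HG; auto|rewrite Hr; simpl; rewrite HH; auto|auto|].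
  exists (proj1_sig (g c)). split; [|split].
  - assert (K := Hr (g c)). rewrite Hg2 in K. pose proof (P_bound Q 4 HP (proj1_sig (g c))). lia.
  - apply (proj2 (Hle (g c) xG)). rewrite Hg2; auto.
  - apply (proj2 (Hle (g c) xH)). rewrite Hg2; auto.
Qed.

Lemma VQ3 v G H s s' : prk Q v = 1 -> prk Q G = 4 -> prk Q H = 4 -> G <> H ->
  prk Q s = 3 -> prk Q s' = 3 -> ple Q v s -> ple Q v s' ->
  ple Q s G -> ple Q s H -> ple Q s' G -> ple Q s' H -> s = s'.
Proof.
  intros Hv HG HH Hne Hs Hs' Hvs Hvs' K1 K2 K3 K4. get_vfig v Hv.
  set (xG := exist (fun H => ple Q v H) G (P_trans Q 4 HP _ _ _ Hvs K1)).
  set (xH := exist (fun H0 => ple Q v H0) H (P_trans Q 4 HP _ _ _ Hvs K2)).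
  set (xs := exist (fun H => ple Q v H) s Hvs). set (xs' := exist (fun H => ple Q v H) s' Hvs').
  assert (Hne' : phi xG <> phi xH).
  { intro E. apply (f_equal g) in E. rewrite !Hg1 in E. apply Hne. apply (f_equal (@proj1_sig _ _) E). }
  assert (E : phi xs = phi xs').
  { assert (R1 : hc_rk (phi xG) = 1). { rewrite Hr; unfold xG; cbn [proj1_sig]; lia. }
    assert (R2 : hc_rk (phi xH) = 1) by (rewrite Hr; unfold xH; cbn [proj1_sig]; lia).
    assert (R3 : hc_rk (phi xs) = 2) by (rewrite Hr; unfold xs; cbn [proj1_sig]; lia).
    assert (R4 : hc_rk (phi xs') = 2) by (rewrite Hr; unfold xs'; cbn [proj1_sig]; lia).
    apply (hcH2 (phi xG) (phi xH)); auto.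
    - apply (Hle xs xG); auto.
    - apply (Hle xs xH); auto.
    - apply (Hle xs' xG); auto.
    - apply (Hle xs' xH); auto. }
  apply (f_equal g) in E. rewrite !Hg1 in E. apply (f_equal (@proj1_sig _ _) E).
Qed.

Lemma all_in G y : prk Q G = 4 -> prk Q y = 1 -> ple Q y G.
Proof.
  intros HG Hy.
  destruct (flag_through Q 4 HP G G (P_refl Q 4 HP G)) as [Phi [FPhi [EG _]]].
  destruct (flag_through Q 4 HP y y (P_refl Q 4 HP y)) as [Psi [FPsi [Ey _]]].
  rewrite HG in EG. rewrite Hy in Ey.
  destruct (P_sfc Q 4 HP Phi Psi FPhi FPsi) as (k & h & H0 & Hk & Hfl & Hadj).
  assert (Inv : forall m, m <= k -> ple Q (h m 1) G).
  { induction m as [|m IH]; intros Hm.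
    - rewrite H0 by lia. rewrite <- EG. apply (flag_le Q 4); auto; lia.
    - destruct (Hadj m ltac:(lia)) as [i [Hi1 [Hi2 Hi3]]].
      assert (Fm := proj1 (Hfl m ltac:(lia))). assert (Fm1 := proj1 (Hfl (S m) Hm)).
      specialize (IH ltac:(lia)).
      destruct (Nat.eq_dec i 1) as [->|Hi].
      + assert (E2 : h m 2 = h (S m) 2) by (apply Hi3; lia).
        apply (P_trans Q 4 HP _ (h (S m) 2)); [apply (flag_le Q 4); auto; lia|].
        rewrite <- E2. apply (VQ1 (h m 1)); auto; try (apply (flag_rank Q 4); auto; lia).
        apply (flag_le Q 4); auto; lia.
      + rewrite <- Hi3; auto; lia. }
  rewrite <- Ey, <- (Hk 1) by lia. apply Inv; auto.
Qed.

Lemma some_facet : exists G, prk Q G = 4.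
Proof.
  destruct (P_bot Q 4 HP) as [b _].
  destruct (flag_through Q 4 HP b b (P_refl Q 4 HP b)) as [Phi [FPhi _]].
  exists (Phi 4). apply (flag_rank Q 4); auto.
Qed.

Lemma below_vertex x : 1 <= prk Q x -> exists v, prk Q v = 1 /\ ple Q v x.
Proof.
  intros H. destruct (P_bot Q 4 HP) as [b [Hb Hb2]].
  destruct (P_graded Q 4 HP b x 1 (Hb2 x)) as [z [_ [H2 H3]]]; try lia. eauto.
Qed.

Lemma above_facet x : prk Q x <= 4 -> exists G, prk Q G = 4 /\ ple Q x G.
Proof.
  intros H. destruct (P_top Q 4 HP) as [t [Ht Ht2]].
  destruct (P_graded Q 4 HP x t 4 (Ht2 x)) as [z [H1 [_ H3]]]; try lia. eauto.
Qed.

Lemma G1 x y : prk Q x = 1 -> prk Q y = 1 -> x <> y -> exists e, prk Q e = 2 /\ ple Q x e /\ ple Q y e.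
Proof.
  intros Hx Hy Hne. destruct some_facet as [G HG].
  apply (FQ1 G); auto; apply all_in; auto.
Qed.

Lemma G2 a b e e' : prk Q a = 1 -> prk Q b = 1 -> a <> b -> prk Q e = 2 -> prk Q e' = 2 ->
  ple Q a e -> ple Q b e -> ple Q a e' -> ple Q b e' -> e = e'.
Proof.
  intros Ha Hb Hab He He' H1 H2 H3 H4.
  destruct (above_facet e) as [G [HG HeG]]; [lia|].
  apply (FQ2 G a b); auto. apply (VQ1 a); auto. apply all_in; auto.
Qed.

Lemma G3 G H : prk Q G = 4 -> prk Q H = 4 -> G <> H -> exists s, prk Q s = 3 /\ ple Q s G /\ ple Q s H.
Proof.
  intros HG HH Hne. destruct (below_vertex G) as [v [Hv _]]; [lia|].
  apply (VQ2 v); auto; apply all_in; auto.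
Qed.

Lemma G4 G H s s' : prk Q G = 4 -> prk Q H = 4 -> G <> H -> prk Q s = 3 -> prk Q s' = 3 ->
  ple Q s G -> ple Q s H -> ple Q s' G -> ple Q s' H -> s = s'.
Proof.
  intros HG HH Hne Hs Hs' K1 K2 K3 K4.
  destruct (below_vertex s) as [v [Hv Hvs]]; [lia|].
  apply (VQ3 v G H); auto. apply (FQ3 G); auto. apply all_in; auto.
Qed.

End QFacts.

Section Main.
Variable Q : Poset.
Hypothesis HP : is_polytope 4 Q.
Hypothesis HFac : has_facets 4 Q hemicube.
Hypothesis HV : has_vertex_figures Q hemioctahedron.
Variable R : Poset.
Hypothesis HR : is_polytope 4 R.
Variable f : Q -> R.
Hypothesis Hf : covering 4 Q R f.

Lemma f_rk x : prk R (f x) = prk Q x.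
Proof. destruct Hf as (H&_); auto. Qed.
Lemma f_mono x y : ple Q x y -> ple R (f x) (f y).
Proof. destruct Hf as (_&H&_); auto. Qed.

Lemma adj_img phi i z : is_flag Q 4 phi -> 1 <= i -> i <= 4 -> prk Q z = i ->
  ple Q (phi (i-1)) z -> ple Q z (phi (S i)) -> phi i <> z -> f (phi i) <> f z.
Proof.
  intros Hphi H1 H2 Hz Hlo Hhi Hne.
  destruct Hf as (_&_&_&_&Had).
  assert (F' := flag_replace Q 4 HP phi i z Hphi H1 H2 Hz Hlo Hhi).
  destruct (Had i _ _ Hphi F' (flag_replace_adj Q 4 phi i z ltac:(lia) Hne)) as [_ [Hn _]].
  cbv beta in Hn. rewrite Nat.eqb_refl in Hn. auto.
Qed.

Lemma inj1 x y : prk Q x = 1 -> prk Q y = 1 -> x <> y -> f x <> f y.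
Proof.
  intros Hx Hy Hne. destruct (G1 Q HP HFac HV x y Hx Hy Hne) as [e [He [Hxe Hye]]].
  destruct (flag_through Q 4 HP x e Hxe) as [Phi [FP [E1 E2]]].
  rewrite Hx in E1. rewrite He in E2.
  rewrite <- E1. apply (adj_img Phi 1 y); auto; try lia.
  - apply (P_rank0 Q 4 HP). apply (flag_rank Q 4); auto; lia.
  - simpl. rewrite E2; auto.
  - congruence.
Qed.

Lemma inj4 x y : prk Q x = 4 -> prk Q y = 4 -> x <> y -> f x <> f y.
Proof.
  intros Hx Hy Hne. destruct (G3 Q HP HV x y Hx Hy Hne) as [s [Hs [Hsx Hsy]]].
  destruct (flag_through Q 4 HP s x Hsx) as [Phi [FP [E1 E2]]].
  rewrite Hs in E1. rewrite Hx in E2.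
  rewrite <- E2. apply (adj_img Phi 4 y); auto; try lia.
  - simpl. rewrite E1; auto.
  - apply (P_rankT Q 4 HP). apply (flag_rank Q 4); auto; lia.
  - congruence.
Qed.

Lemma f_inj x y : f x = f y -> x = y.
Proof.
  intros E. destruct (classic (x = y)) as [|Hne]; auto. exfalso.
  assert (Hr : prk Q x = prk Q y) by (rewrite <- !f_rk, E; auto).
  pose proof (P_bound Q 4 HP x) as Hb.
  assert (prk Q x = 0 \/ prk Q x = 1 \/ prk Q x = 2 \/ prk Q x = 3 \/ prk Q x = 4 \/ prk Q x = 5) as Hc by lia.
  destruct Hc as [H0|[H1|[H2|[H3|[H4|H5]]]]].
  - apply Hne. apply (P_anti Q 4 HP); apply (P_rank0 Q 4 HP); lia.
  - apply (inj1 x y); auto; lia.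
  - destruct (P_bot Q 4 HP) as [b [Hb0 Hb2]].
    destruct (P_diamond Q 4 HP b x (Hb2 x) ltac:(lia)) as (z1&z2&Hz12&A1&A2&A3&A4&B1&B2&B3&B4&_).
    destruct (P_diamond Q 4 HP b y (Hb2 y) ltac:(lia)) as (w1&w2&Hw12&C1&C2&C3&C4&D1&D2&D3&D4&_).
    assert (Rk : forall z, ple Q b z -> ple Q z x -> z <> b -> z <> x -> prk Q z = 1).
    { intros z K1 K2 K3 K4. pose proof (P_strict Q 4 HP _ _ K1 (fun e => K3 (eq_sym e))).
      pose proof (P_strict Q 4 HP _ _ K2 K4). lia. }
    assert (Rk' : forall z, ple Q b z -> ple Q z y -> z <> b -> z <> y -> prk Q z = 1).
    { intros z K1 K2 K3 K4. pose proof (P_strict Q 4 HP _ _ K1 (fun e => K3 (eq_sym e))).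
      pose proof (P_strict Q 4 HP _ _ K2 K4). lia. }
    assert (Hin : forall z, ple Q b z -> ple Q z x -> z <> b -> z <> x -> ple Q z y).
    { intros z K1 K2 K3 K4.
      assert (T := P_three R 4 HR (f b) (f x) (f z) (f w1) (f w2) (f_mono _ _ (Hb2 x))
        ltac:(rewrite !f_rk; lia) (f_mono _ _ K1) (f_mono _ _ K2) ltac:(rewrite !f_rk, (Rk z); auto; lia)
        (f_mono _ _ C1) ltac:(rewrite E; apply f_mono; auto) ltac:(rewrite !f_rk, (Rk' w1); auto; lia)
        (f_mono _ _ D1) ltac:(rewrite E; apply f_mono; auto) ltac:(rewrite !f_rk, (Rk' w2); auto; lia)).
      destruct T as [T|[T|T]].
      - assert (z = w1); [|subst; auto].
        destruct (classic (z = w1)); auto. exfalso. apply (inj1 z w1); auto.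
      - assert (z = w2); [|subst; auto].
        destruct (classic (z = w2)); auto. exfalso. apply (inj1 z w2); auto.
      - exfalso. apply (inj1 w1 w2); auto. }
    apply Hne. apply (G2 Q HP HFac HV z1 z2); auto; lia.
  - destruct (P_top Q 4 HP) as [t [Ht0 Ht2]].
    destruct (P_diamond Q 4 HP x t (Ht2 x) ltac:(lia)) as (z1&z2&Hz12&A1&A2&A3&A4&B1&B2&B3&B4&_).
    destruct (P_diamond Q 4 HP y t (Ht2 y) ltac:(lia)) as (w1&w2&Hw12&C1&C2&C3&C4&D1&D2&D3&D4&_).
    assert (Rk : forall z, ple Q x z -> ple Q z t -> z <> x -> z <> t -> prk Q z = 4).
    { intros z K1 K2 K3 K4. pose proof (P_strict Q 4 HP _ _ K1 (fun e => K3 (eq_sym e))).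
      pose proof (P_strict Q 4 HP _ _ K2 K4). lia. }
    assert (Rk' : forall z, ple Q y z -> ple Q z t -> z <> y -> z <> t -> prk Q z = 4).
    { intros z K1 K2 K3 K4. pose proof (P_strict Q 4 HP _ _ K1 (fun e => K3 (eq_sym e))).
      pose proof (P_strict Q 4 HP _ _ K2 K4). lia. }
    assert (Hin : forall z, ple Q x z -> ple Q z t -> z <> x -> z <> t -> ple Q y z).
    { intros z K1 K2 K3 K4.
      assert (T := P_three R 4 HR (f x) (f t) (f z) (f w1) (f w2) (f_mono _ _ (Ht2 x))
        ltac:(rewrite !f_rk; lia) (f_mono _ _ K1) (f_mono _ _ K2) ltac:(rewrite !f_rk, (Rk z); auto; lia)
        ltac:(rewrite E; apply f_mono; auto) (f_mono _ _ C2) ltac:(rewrite !f_rk, (Rk' w1); auto; lia)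
        ltac:(rewrite E; apply f_mono; auto) (f_mono _ _ D2) ltac:(rewrite !f_rk, (Rk' w2); auto; lia)).
      destruct T as [T|[T|T]].
      - assert (z = w1); [|subst; auto].
        destruct (classic (z = w1)); auto. exfalso. apply (inj4 z w1); auto.
      - assert (z = w2); [|subst; auto].
        destruct (classic (z = w2)); auto. exfalso. apply (inj4 z w2); auto.
      - exfalso. apply (inj4 w1 w2); auto. }
    apply Hne. apply (G4 Q HP HFac HV z1 z2); auto; lia.
  - apply (inj4 x y); auto; lia.
  - apply Hne. apply (P_anti Q 4 HP); apply (P_rankT Q 4 HP); lia.
Qed.

Lemma f_iso : isomorphic Q R.
Proof.
  destruct Hf as (_&_&Hsurj&Hlift&_).
  exists f. split.
  - exists (fun y => proj1_sig (constructive_indefinite_description _ (Hsurj y))).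
    split.
    + intros x. apply f_inj. destruct (constructive_indefinite_description _ (Hsurj (f x))); auto.
    + intros y. destruct (constructive_indefinite_description _ (Hsurj y)); auto.
  - intros x y. split; [apply f_mono|]. intros Hle.
    destruct (flag_through R 4 HR _ _ Hle) as [Phi [FP [E1 E2]]].
    destruct (Hlift Phi FP) as [Psi [FPsi HPsi]].
    rewrite !f_rk in E1, E2.
    pose proof (P_bound Q 4 HP x). pose proof (P_bound Q 4 HP y).
    assert (Ex : Psi (prk Q x) = x) by (apply f_inj; rewrite HPsi; auto).
    assert (Ey : Psi (prk Q y) = y) by (apply f_inj; rewrite HPsi; auto).
    rewrite <- Ex, <- Ey. apply (flag_le Q 4); auto.
    pose proof (P_rk_le R 4 HR _ _ Hle). rewrite !f_rk in H1. auto.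
Qed.

End Main.

Theorem corollary3p2 (Q : Poset) (HQ : is_universal4 hemicube hemioctahedron Q)
  (R : Poset) (HR : is_polytope 4 R) (f : Q -> R) (Hf : covering 4 Q R f) :
  isomorphic Q R.
Proof.
  destruct HQ as [[HP _] [HFac [HV _]]].
  exact (f_iso Q HP HFac HV R HR f Hf).
Qed.
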